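(* Let $Y$ and $Z$ be sofic shifts and let $(G,L_G)$ and $(H,L_H)$ be right-resolving labeled graphs presenting $Y$ and $Z$, respectively. Assume that there are conjugacies $\psi : Y \to Z$ and $\phi : X_G \to X_H$ such that $L_H\circ\phi=\psi\circ L_G$. Then there is a conjugacy $\phi'' : X_{G''} \to X_{H''}$ such that $L_{H''}\circ\phi''=\psi\circ L_{G''}$.
   Context: A labeled graph $(H,L_H)$: finite directed graph (vertices $V_H$, edges $E_H$, source/terminal maps $s_H,t_H$) without sinks or sources, labeling $L_H:E_H\to A$, edge shift $X_H$; $L_H$ applied coordinatewise; it presents $L_H(X_H)$. Right-resolving: distinct edges with the same source have distinct labels. Conjugacy: shift-commuting homeomorphism. Subset construction $(H'',L_{H''})$: vertices are non-empty subsets of $V_H$; for vertices $F,F'$ and a symbol $a$ there is an edge from $F$ to $F'$ labeled $a$ when $F\subseteq\{s_H(e): L_H(e)=a\}$ and $F'=\{t_H(e): s_H(e)\in F, L_H(e)=a\}$; the graph is then trimmed by repeatedly removing sinks and sources. $(G'',L_{G''})$ is defined likewise from $(G,L_G)$. *)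

(* Defs.v *)
From mathcomp Require Import all_boot all_order all_algebra.
Set Implicit Arguments. Unset Strict Implicit. Unset Printing Implicit Defensive.
Import GRing.Theory Num.Theory.
Local Open Scope ring_scope.

Definition shift (T : Type) (x : int -> T) : int -> T := fun i => x (i + 1).

Definition agree_on (T : Type) (m : nat) (x y : int -> T) : Prop :=
  forall i : int, (absz i <= m)%N -> x i = y i.

(* continuity of f restricted to X, for the product topology of discrete
   alphabets (cylinder sets on central windows form a basis) *)
Definition cont_on (T U : Type) (X : (int -> T) -> Prop)
  (f : (int -> T) -> (int -> U)) : Prop :=
  forall x, X x -> forall n : nat, exists m : nat,
    forall y, X y -> agree_on m x y -> agree_on n (f x) (f y).

Definition conjugacy (T U : Type) (X : (int -> T) -> Prop) (Y : (int -> U) -> Prop)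
  (f : (int -> T) -> (int -> U)) : Prop :=
  [/\ (forall x, X x -> Y (f x)),
      (forall x, X x -> f (shift x) = shift (f x)),
      cont_on X f &
      exists g : (int -> U) -> (int -> T),
        [/\ (forall y, Y y -> X (g y)),
            (forall x, X x -> g (f x) = x),
            (forall y, Y y -> f (g y) = y) &
            cont_on Y g]].

Definition edge_shift (V E : finType) (s t : E -> V) (x : int -> E) : Prop :=
  forall i : int, t (x i) = s (x (i + 1)).

Definition no_sinks_sources (V E : finType) (s t : E -> V) : Prop :=
  forall v : V, (exists e, s e = v) /\ (exists e, t e = v).

Definition right_resolving (V E A : finType) (s : E -> V) (L : E -> A) : Prop :=
  forall e e', s e = s e' -> L e = L e' -> e = e'.

Definition lab (E A : Type) (L : E -> A) (x : int -> E) : int -> A :=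
  fun i => L (x i).

Definition presents (V E A : finType) (s t : E -> V) (L : E -> A)
  (Y : (int -> A) -> Prop) : Prop :=
  forall y, Y y <-> exists x, edge_shift s t x /\ y = lab L x.

Section SubsetConstruction.
Variables (V E A : finType) (s t : E -> V) (L : E -> A).

Definition sc_vert : {set {set V}} := [set F : {set V} | F != set0].

(* an edge is a pair (F, a): source F, label a, target sc_tgt (F, a) *)
Definition sc_src (p : {set V} * A) : {set V} := p.1.
Definition sc_tgt (p : {set V} * A) : {set V} :=
  [set t e | e : E & (s e \in p.1) && (L e == p.2)].
Definition sc_lab (p : {set V} * A) : A := p.2.

Definition sc_edge (p : {set V} * A) : bool :=
  [&& sc_src p \in sc_vert, sc_tgt p \in sc_vert &
      sc_src p \subset [set s e | e : E & L e == p.2]].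

(* one round of removing all sinks and sources *)
Definition sc_trim_step (W : {set {set V}}) : {set {set V}} :=
  [set F in W | [exists p, [&& sc_edge p, sc_src p == F & sc_tgt p \in W]] &&
                [exists p, [&& sc_edge p, sc_tgt p == F & sc_src p \in W]]].

(* repeated removal; stabilises after at most #|{set V}| rounds *)
Definition sc_trim_vert : {set {set V}} :=
  iter #|{: {set V}}| sc_trim_step sc_vert.

Definition sc_trim_edge (p : {set V} * A) : bool :=
  [&& sc_edge p, sc_src p \in sc_trim_vert & sc_tgt p \in sc_trim_vert].

(* edge shift X_{G''} of the trimmed subset-construction graph *)
Definition sc_shift (x : int -> {set V} * A) : Prop :=
  (forall i, sc_trim_edge (x i)) /\ (forall i : int, sc_tgt (x i) = sc_src (x (i + 1))).

End SubsetConstruction.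

(* Main.v *)
Require Import Defs.
From mathcomp Require Import all_boot all_order all_algebra zify.
From Stdlib Require Import Classical ClassicalEpsilon FunctionalExtensionality.
Set Implicit Arguments. Unset Strict Implicit. Unset Printing Implicit Defensive.
Import GRing.Theory Num.Theory.
Local Open Scope ring_scope.

Definition asb (P : Prop) : bool := if excluded_middle_informative P then true else false.
Lemma asbT (P : Prop) : asb P <-> P.
Proof. by rewrite /asb; case: excluded_middle_informative. Qed.

Lemma agree_mono (T : Type) (m m' : nat) (x y : int -> T) :
  (m <= m')%N -> agree_on m' x y -> agree_on m x y.
Proof. move=> le H i Hi; apply: H; exact: leq_trans Hi le. Qed.

Lemma agree_sym (T : Type) (m : nat) (x y : int -> T) :
  agree_on m x y -> agree_on m y x.
Proof. by move=> H i Hi; rewrite H. Qed.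

Lemma edge_shift_shift (V E : finType) (s t : E -> V) x :
  edge_shift s t x -> edge_shift s t (shift x).
Proof. by move=> H i; rewrite /shift H. Qed.

Section Generic.
Variables (V E A : finType) (s t : E -> V) (L : E -> A).

Definition PP (p : int -> {set V} * A) (x : int -> E) : Prop :=
  [/\ edge_shift s t x, lab L x = lab (@sc_lab V A) p & forall i, s (x i) \in (p i).1].

Lemma PP_lab p x i : PP p x -> L (x i) = (p i).2.
Proof. by case=> _ H _; move: (f_equal (fun f => f i) H). Qed.

Lemma chain_shift (q : int -> {set V} * A) :
  (forall i, sc_edge s t L (q i)) ->
  (forall i, sc_tgt s t L (q i) = sc_src (q (i + 1))) -> sc_shift s t L q.
Proof.
move=> He Hc.
have Hk : forall k i, sc_src (q i) \in iter k (sc_trim_step s t L) (sc_vert V).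
  elim=> [|k IH] i /=.
    by case/and3P: (He i).
  rewrite /sc_trim_step inE IH /=; apply/andP; split; apply/existsP.
    by exists (q i); rewrite He eqxx /= Hc IH.
  exists (q (i - 1)); rewrite He Hc subrK eqxx /=.
  by have := IH (i - 1).
split=> // i; rewrite /sc_trim_edge He /sc_trim_vert Hk /=.
by rewrite Hc Hk.
Qed.

Lemma sc_shift_edge q i : sc_shift s t L q -> sc_edge s t L (q i).
Proof. by case=> H _; case/and3P: (H i). Qed.

Lemma sc_shift_chain q i : sc_shift s t L q -> sc_tgt s t L (q i) = sc_src (q (i + 1)).
Proof. by case. Qed.

Section Exist.
Variable p : int -> {set V} * A.
Hypothesis Hp : sc_shift s t L p.

Lemma dom_edge i v : v \in (p i).1 -> exists e, s e = v /\ L e = (p i).2.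
Proof.
move=> Hv; case/and3P: (sc_shift_edge i Hp) => _ _ /subsetP /(_ v Hv).
by case/imsetP=> e; rewrite inE => /eqP He ->; exists e.
Qed.

Lemma tgt_in i e : s e \in (p i).1 -> L e = (p i).2 -> t e \in (p (i + 1)).1.
Proof.
move=> H1 H2; rewrite -[(p (i + 1)).1]/(sc_src (p (i + 1))) -(sc_shift_chain i Hp).
by apply/imsetP; exists e => //; rewrite inE H1 H2 eqxx.
Qed.

Lemma pred_edge i v : v \in (p (i + 1)).1 ->
  exists e, [/\ s e \in (p i).1, L e = (p i).2 & t e = v].
Proof.
rewrite -[(p (i + 1)).1]/(sc_src (p (i + 1))) -(sc_shift_chain i Hp).
by case/imsetP=> e; rewrite inE => /andP [H1 /eqP H2] ->; exists e.
Qed.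

Lemma exists_path0 u : u \in (p 0).1 -> exists x, PP p x /\ s (x 0) = u.
Proof.
move=> Hu.
have [e0 _] := dom_edge Hu.
pose sf (i : int) v := odflt e0 [pick e | (s e == v) && (L e == (p i).2)].
have Hsf : forall i v, v \in (p i).1 -> s (sf i v) = v /\ L (sf i v) = (p i).2.
  move=> i v Hv; rewrite /sf; case: pickP => [e /andP [/eqP -> /eqP ->] //|H].
  by have [e [He1 He2]] := dom_edge Hv; move: (H e); rewrite He1 He2 !eqxx.
pose pf (i : int) v := odflt e0 [pick e | [&& s e \in (p i).1, L e == (p i).2 & t e == v]].
have Hpf : forall i v, v \in (p (i + 1)).1 ->
    [/\ s (pf i v) \in (p i).1, L (pf i v) = (p i).2 & t (pf i v) = v].
  move=> i v Hv; rewrite /pf; case: pickP => [e /and3P [H1 /eqP H2 /eqP H3] //|H].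
  by have [e [He1 He2 He3]] := pred_edge Hv; move: (H e); rewrite He1 He2 He3 !eqxx.
pose fix fv n := if n is n'.+1 then t (sf (Posz n') (fv n')) else u.
pose fix bv n := if n is n'.+1 then s (pf (Negz n') (bv n')) else u.
have Hfv : forall n, fv n \in (p (Posz n)).1.
  elim=> [|n IH] //=.
  have [H1 H2] := Hsf _ _ IH.
  have := @tgt_in (Posz n) (sf n (fv n)); rewrite H1 => /(_ IH H2).
  by rewrite (_ : Posz n + 1 = Posz n.+1) //; lia.
have Hbv : forall n, bv n \in (p (- (Posz n))).1.
  elim=> [|n IH] //=.
  have HN : bv n \in (p (Negz n + 1)).1 by rewrite (_ : Negz n + 1 = - Posz n) //; lia.
  have [H1 H2 H3] := Hpf (Negz n) (bv n) HN.
  by rewrite (_ : - Posz n.+1 = Negz n) //; lia.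
pose x (i : int) := match i with Posz n => sf n (fv n) | Negz n => pf (Negz n) (bv n) end.
have HbvN : forall n, bv n \in (p (Negz n + 1)).1.
  by move=> n; rewrite (_ : Negz n + 1 = - Posz n) //; lia.
have HT : forall n, t (pf (Negz n) (bv n)) = bv n by move=> n; case: (Hpf _ _ (HbvN n)).
have HS : forall n, s (pf (Negz n) (bv n)) \in (p (Negz n)).1 by move=> n; case: (Hpf _ _ (HbvN n)).
have HL : forall n, L (pf (Negz n) (bv n)) = (p (Negz n)).2 by move=> n; case: (Hpf _ _ (HbvN n)).
exists x; split; last by rewrite /x; case: (Hsf _ _ (Hfv 0%N)).
split.
- case=> [n|n] /=.
    rewrite addn1.
    by rewrite /= (Hsf _ _ (Hfv n.+1)).1.
  case: n => [|n].
    rewrite (_ : Negz 0 + 1 = Posz 0) //=.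
    by rewrite HT (Hsf _ _ (Hfv 0%N)).1.
  rewrite (_ : Negz n.+1 + 1 = Negz n); last by lia.
  by rewrite /= HT.
- apply: functional_extensionality; case=> [n|n] /=.
    by rewrite /lab /= (Hsf _ _ (Hfv n)).2.
  by rewrite /lab /= HL.
- case=> [n|n] /=.
    by rewrite (Hsf _ _ (Hfv n)).1.
  by rewrite HS.
Qed.
End Exist.

Lemma exists_path p k u : sc_shift s t L p -> u \in (p k).1 ->
  exists x, PP p x /\ s (x k) = u.
Proof.
move=> Hp Hu.
pose p' i := p (i + k).
have Hp' : sc_shift s t L p'.
  apply: chain_shift => i.
    exact: (sc_shift_edge (i + k) Hp).
  by rewrite /p' (sc_shift_chain (i + k) Hp) addrAC.
have Hu' : u \in (p' 0).1 by rewrite /p' add0r.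
have [x' [[H1 H2 H3] H4]] := exists_path0 Hp' Hu'.
exists (fun i => x' (i - k)); split; last by rewrite subrr.
split.
- by move=> i; rewrite H1 addrAC.
- apply: functional_extensionality => i.
  by move: (f_equal (fun f => f (i - k)) H2); rewrite /lab /p' subrK.
- by move=> i; move: (H3 (i - k)); rewrite /p' subrK.
Qed.

Lemma PP_shift p x : PP p x -> PP (shift p) (shift x).
Proof.
case=> H1 H2 H3; split.
- exact: edge_shift_shift.
- by apply: functional_extensionality => i; rewrite /lab /shift (PP_lab _ (And3 H1 H2 H3)).
- by move=> i; exact: H3.
Qed.

Lemma PP_unshift p x : PP (shift p) x -> PP p (fun i => x (i - 1)).
Proof.
case=> H1 H2 H3; split.
- by move=> i; rewrite H1 addrAC.
- apply: functional_extensionality => i; rewrite /lab.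
  by move: (PP_lab (i - 1) (And3 H1 H2 H3)); rewrite /shift subrK.
- by move=> i; move: (H3 (i - 1)); rewrite /shift subrK.
Qed.

Lemma PP_nonempty p : sc_shift s t L p -> exists x, PP p x.
Proof.
move=> Hp; case/and3P: (sc_shift_edge 0 Hp); rewrite inE => /set0Pn [u Hu] _ _.
by have [x [Hx _]] := exists_path Hp Hu; exists x.
Qed.

Hypothesis rr : right_resolving s L.

Lemma fwd_agree x x' (k : int) (n : nat) : edge_shift s t x -> edge_shift s t x' ->
  (forall j : nat, (j <= n)%N -> L (x (k + j%:Z)) = L (x' (k + j%:Z))) ->
  s (x k) = s (x' k) -> forall j : nat, (j <= n)%N -> x (k + j%:Z) = x' (k + j%:Z).
Proof.
move=> Ex Ex' HL Hs; elim=> [|j IH] Hj.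
  by apply: rr; rewrite addr0 //; move: (HL 0%N isT); rewrite addr0.
apply: rr; last exact: HL.
rewrite (_ : k + j.+1%:Z = k + j%:Z + 1); last by lia.
by rewrite -Ex -Ex' IH // ltnW.
Qed.

Lemma PP_agree p p' x x' (m : nat) : PP p x -> PP p' x' ->
  agree_on m (lab (@sc_lab V A) p) (lab (@sc_lab V A) p') ->
  s (x (- m%:Z)) = s (x' (- m%:Z)) -> agree_on m x x'.
Proof.
move=> Px Px' Hl Hs i Hi.
have Ex : edge_shift s t x by case: Px.
have Ex' : edge_shift s t x' by case: Px'.
have := @fwd_agree x x' (- m%:Z) (2 * m) Ex Ex'.
have -> : i = - m%:Z + (absz (i + m%:Z))%:Z by lia.
apply => //; last by lia.
move=> j Hj; rewrite (PP_lab _ Px) (PP_lab _ Px').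
by apply: Hl; lia.
Qed.

End Generic.

Section UC.
Variables (V E : finType) (s t : E -> V) (U : Type) (f : (int -> E) -> (int -> U)).
Hypothesis fc : cont_on (edge_shift s t) f.
Variable n : nat.

Definition ag k (x y : int -> E) := forall i : int, (absz i < k)%N -> x i = y i.
Definition Bad m x y := [/\ edge_shift s t x, edge_shift s t y, agree_on m x y &
   ~ agree_on n (f x) (f y)].
Definition good k (ab : (int -> E) * (int -> E)) :=
  forall m, exists x y, [/\ Bad m x y, ag k x ab.1 & ag k y ab.2].

Lemma Bad_mono m m' x y : (m <= m')%N -> Bad m' x y -> Bad m x y.
Proof. by move=> le [H1 H2 H3 H4]; split=> //; exact: agree_mono H3. Qed.

Lemma ag_mono k k' x y : (k <= k')%N -> ag k' x y -> ag k x y.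
Proof. by move=> le H i Hi; apply: H; exact: leq_trans Hi le. Qed.

Definition key k (x y : int -> E) : (E * E) * (E * E) :=
  ((x (- k%:Z), x k%:Z), (y (- k%:Z), y k%:Z)).

Lemma ag_ext k x x0 a : ag k x a -> ag k x0 a -> x (- k%:Z) = x0 (- k%:Z) ->
  x k%:Z = x0 k%:Z -> ag k.+1 x x0.
Proof.
move=> H1 H2 H3 H4 i Hi.
have : (absz i < k)%N \/ i = k%:Z \/ i = - k%:Z by lia.
by case=> [Hk|[->|->]] //; rewrite H1 ?H2.
Qed.

Lemma good_step k ab : good k ab -> exists ab', [/\ good k.+1 ab', Bad k ab'.1 ab'.2,
  ag k ab'.1 ab.1 & ag k ab'.2 ab.2].
Proof.
move=> Hg; apply: NNPP => Hno.
have dead : forall c, exists m, forall x y, Bad m x y -> ag k x ab.1 -> ag k y ab.2 ->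
    key k x y <> c.
  move=> c; apply: NNPP => Hc; apply: Hno.
  have Hc' : forall m, exists x y, [/\ Bad m x y, ag k x ab.1, ag k y ab.2 & key k x y = c].
    move=> m; apply: NNPP => H; apply: Hc; exists m => x y B1 B2 B3 B4.
    by apply: H; exists x, y.
  have [x0 [y0 [B0 X0 Y0 K0]]] := Hc' k.
  exists (x0, y0); split=> //= m.
  have [x [y [B X Y K]]] := Hc' (maxn m k).
  exists x, y; split.
  - by apply: Bad_mono B; exact: leq_maxl.
  - by apply: (ag_ext X X0); rewrite -K0 in K; case: K.
  - by apply: (ag_ext Y Y0); rewrite -K0 in K; case: K.
pose mf c := epsilon (inhabits 0%N) (fun m => forall x y, Bad m x y -> ag k x ab.1 ->
   ag k y ab.2 -> key k x y <> c).
have Hmf : forall c x y, Bad (mf c) x y -> ag k x ab.1 -> ag k y ab.2 -> key k x y <> c.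
  by move=> c; apply: (epsilon_spec (inhabits 0%N) _ (dead c)).
have [x [y [B X Y]]] := Hg (\max_(c : (E * E) * (E * E)) mf c).
apply: (Hmf (key k x y) x y) => //.
by apply: Bad_mono B; apply: (leq_bigmax_cond (key k x y)).
Qed.

Lemma UC : exists m, forall x y, edge_shift s t x -> edge_shift s t y ->
  agree_on m x y -> agree_on n (f x) (f y).
Proof.
apply: NNPP => Hn.
have Hb : forall m, exists x y, Bad m x y.
  move=> m; apply: NNPP => H; apply: Hn; exists m => x y Xx Xy Ag.
  by apply: NNPP => Hf; apply: H; exists x, y; split.
have [x0 [y0 _]] := Hb 0%N.
pose nextf k ab := epsilon (inhabits ab) (fun ab' => [/\ good k.+1 ab', Bad k ab'.1 ab'.2,
  ag k ab'.1 ab.1 & ag k ab'.2 ab.2]).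
pose fix sq k := if k is k'.+1 then nextf k' (sq k') else (x0, y0).
have Hg : forall k, good k (sq k).
  elim=> [|k IH] /=.
    move=> m; have [x [y B]] := Hb m; by exists x, y; split.
  by have := epsilon_spec (inhabits (sq k)) _ (good_step IH); case.
have HS : forall k, [/\ good k.+1 (sq k.+1), Bad k (sq k.+1).1 (sq k.+1).2,
  ag k (sq k.+1).1 (sq k).1 & ag k (sq k.+1).2 (sq k).2].
  by move=> k; exact: (epsilon_spec (inhabits (sq k)) _ (good_step (Hg k))).
have Hch : forall j d, ag j (sq j).1 (sq (j + d)%N).1.
  move=> j; elim=> [|d IH]; first by rewrite addn0.
  move=> i Hi; rewrite IH //.
  have [_ _ H _] := HS (j + d)%N.
  by rewrite addnS H //; apply: leq_trans Hi _; exact: leq_addr.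
pose xs (i : int) := (sq (absz i).+1).1 i.
have Hk : forall k i, (absz i < k)%N -> xs i = (sq k).1 i.
  move=> k i Hi; rewrite /xs.
  have -> : k = ((absz i).+1 + (k - (absz i).+1))%N by lia.
  by apply: Hch.
have Xs : edge_shift s t xs.
  move=> i.
  have [_ B1 _ _] := HS (absz i + absz (i + 1)%R)%N.
  case: B1 => E1 _ _ _.
  have h1 : (absz i < (absz i + absz (i + 1)%R).+1)%N by lia.
  have h2 : (absz (i + 1)%R < (absz i + absz (i + 1)%R).+1)%N by lia.
  by rewrite (Hk _ _ h1) (Hk _ _ h2); apply: E1.
have [m0 Hm0] := fc Xs n.
have [x [y [B0 X Y]]] := Hg m0.+1 0%N.
case: B0 => Ex Ey _ Hnot.
have [_ B1 _ _] := HS m0.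
case: B1 => _ _ Ag _.
apply: Hnot => i Hi.
have Hx : agree_on m0 xs x.
  by move=> j Hj; rewrite (Hk m0.+1) // X.
have Hy : agree_on m0 xs y.
  by move=> j Hj; rewrite (Hk m0.+1) // Y // Ag.
by rewrite -(Hm0 x Ex Hx i Hi) (Hm0 y Ey Hy i Hi).
Qed.
End UC.

Definition sc_lift (VG EG A VH EH B : finType) (sG tG : EG -> VG) (LG : EG -> A)
  (sH : EH -> VH) (phi : (int -> EG) -> (int -> EH)) (psi : (int -> A) -> (int -> B))
  (p : int -> {set VG} * A) : int -> {set VH} * B :=
  fun j => ([set v | asb (exists x, PP sG tG LG p x /\ sH (phi x j) = v)],
            psi (lab (@sc_lab VG A) p) j).

Lemma lift_mem (VG EG A VH EH B : finType) (sG tG : EG -> VG) (LG : EG -> A)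
  (sH : EH -> VH) phi (psi : (int -> A) -> (int -> B)) p j v :
  v \in (sc_lift sG tG LG sH phi psi p j).1 <-> exists x, PP sG tG LG p x /\ sH (phi x j) = v.
Proof. by rewrite inE; exact: asbT. Qed.

Section Forward.
Variables (A B VG EG VH EH : finType).
Variables (sG tG : EG -> VG) (LG : EG -> A) (sH tH : EH -> VH) (LH : EH -> B).
Variables (Y : (int -> A) -> Prop) (psi : (int -> A) -> (int -> B))
  (phi : (int -> EG) -> (int -> EH)).
Hypothesis rrG : right_resolving sG LG.
Hypothesis rrH : right_resolving sH LH.
Hypothesis presG : forall x, edge_shift sG tG x -> Y (lab LG x).
Hypothesis psi_shift : forall y, Y y -> psi (shift y) = shift (psi y).
Hypothesis psi_cont : cont_on Y psi.
Hypothesis phi_map : forall x, edge_shift sG tG x -> edge_shift sH tH (phi x).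
Hypothesis phi_shift : forall x, edge_shift sG tG x -> phi (shift x) = shift (phi x).
Hypothesis phi_cont : cont_on (edge_shift sG tG) phi.
Hypothesis compat : forall x, edge_shift sG tG x -> lab LH (phi x) = psi (lab LG x).

Local Notation L2 := (sc_lift sG tG LG sH phi psi).

Lemma PP_Y p x : PP sG tG LG p x -> Y (lab (@sc_lab VG A) p).
Proof. by case=> H1 H2 _; rewrite -H2; apply: presG. Qed.

Lemma phi_PP p x : PP sG tG LG p x -> PP sH tH LH (L2 p) (phi x).
Proof.
move=> Px; have [H1 H2 H3] := Px; split.
- exact: phi_map.
- by rewrite compat // H2.
- by move=> i; apply/lift_mem; exists x.
Qed.

Lemma lab_phi p x i : PP sG tG LG p x -> LH (phi x i) = psi (lab (@sc_lab VG A) p) i.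
Proof.
move=> Px; have [Ex H2 _] := Px.
by rewrite -H2 -(compat Ex).
Qed.

Lemma sc_lift_map p : sc_shift sG tG LG p -> sc_shift sH tH LH (L2 p).
Proof.
move=> Hp; have [x0 Px0] := PP_nonempty Hp.
have Hc : forall i, sc_tgt sH tH LH (L2 p i) = sc_src (L2 p (i + 1)).
  move=> i; apply/setP => v; rewrite /sc_src; apply/idP/idP.
    case/imsetP=> e; rewrite inE => /andP [/lift_mem [x [Px He]] /eqP Hl] ->.
    have Ex : edge_shift sG tG x by case: Px.
    have He' : e = phi x i.
      apply: rrH; first by rewrite He.
      by rewrite Hl /= (lab_phi _ Px).
    by apply/lift_mem; exists x; split => //; rewrite He' -(phi_map Ex).
  move/lift_mem=> [x [Px <-]].
  have Ex : edge_shift sG tG x by case: Px.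
  apply/imsetP; exists (phi x i); last by rewrite (phi_map Ex).
  rewrite inE; apply/andP; split; first by apply/lift_mem; exists x.
  by apply/eqP; rewrite /= (lab_phi _ Px).
apply: chain_shift => // i.
apply/and3P; split.
- rewrite inE /sc_src; apply/set0Pn; exists (sH (phi x0 i)); apply/lift_mem; by exists x0.
- rewrite Hc inE /sc_src; apply/set0Pn; exists (sH (phi x0 (i + 1))); apply/lift_mem; by exists x0.
- rewrite /sc_src; apply/subsetP => v /lift_mem [x [Px <-]].
  have Ex : edge_shift sG tG x by case: Px.
  apply/imsetP; exists (phi x i) => //; rewrite inE /=.
  by apply/eqP; rewrite /= (lab_phi _ Px).
Qed.

Lemma sc_lift_shift p : sc_shift sG tG LG p -> L2 (shift p) = shift (L2 p).
Proof.
move=> Hp; have [x0 Px0] := PP_nonempty Hp.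
apply: functional_extensionality => j; rewrite /shift /sc_lift.
congr pair; last first.
  have -> : lab (@sc_lab VG A) (fun i => p (i + 1)) = shift (lab (@sc_lab VG A) p) by [].
  by rewrite psi_shift //; apply: (PP_Y Px0).
apply/setP => v; rewrite !inE; apply/idP/idP => /asbT [x [Px <-]]; apply/asbT.
  have Px' := PP_unshift Px.
  exists (fun i => x (i - 1)); split => //.
  have Ex' : edge_shift sG tG (fun i => x (i - 1)) by case: Px'.
  have E : phi x = shift (phi (fun i => x (i - 1))).
    rewrite -phi_shift //; congr phi.
    by apply: functional_extensionality => i; rewrite /shift addrK.
  by rewrite E.
exists (shift x); split; first exact: PP_shift.
have Ex : edge_shift sG tG x by case: Px.
by rewrite phi_shift.
Qed.

Lemma sc_lift_cont : cont_on (sc_shift sG tG LG) L2.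
Proof.
move=> p Hp n.
have [m1 Hm1] := UC phi_cont n.
have [x0 Px0] := PP_nonempty Hp.
have [m2 Hm2] := psi_cont (PP_Y Px0) n.
exists (maxn m1 m2) => p' Hp' Ag.
have Ag1 : agree_on m1 p p' by apply: agree_mono Ag; exact: leq_maxl.
have Ag2 : agree_on m2 p p' by apply: agree_mono Ag; exact: leq_maxr.
have [x1 Px1] := PP_nonempty Hp'.
have key : forall q q', sc_shift sG tG LG q' -> agree_on m1 q q' ->
    forall j, (absz j <= n)%N -> forall v, v \in (L2 q j).1 -> v \in (L2 q' j).1.
  move=> q q' Hq' Agq j Hj v /lift_mem [x [Px <-]].
  have Hu : sG (x (- m1%:Z)) \in (q' (- m1%:Z)).1.
    rewrite -Agq; last by lia.
    by case: Px.
  have [x' [Px' Hx']] := exists_path Hq' Hu.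
  apply/lift_mem; exists x'; split => //.
  have Ex : edge_shift sG tG x by case: Px.
  have Ex' : edge_shift sG tG x' by case: Px'.
  rewrite (Hm1 x x' Ex Ex') //.
  apply: (PP_agree rrG Px Px') => //.
  by move=> i Hi; rewrite /lab Agq.
move=> j Hj; rewrite /sc_lift; congr pair.
  apply/setP => v; apply/idP/idP; first exact: key.
  by apply: key => //; exact: agree_sym.
have Y' : Y (lab (@sc_lab VG A) p') by apply: (PP_Y Px1).
rewrite (Hm2 _ Y') //.
by move=> i Hi; rewrite /lab Ag2.
Qed.

Section Back.
Variables (g : (int -> EH) -> (int -> EG)) (h : (int -> B) -> (int -> A)).
Hypothesis g_phi : forall x, edge_shift sG tG x -> g (phi x) = x.
Hypothesis g_cont : cont_on (edge_shift sH tH) g.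
Hypothesis h_psi : forall y, Y y -> h (psi y) = y.

Lemma sc_lift_inv p : sc_shift sG tG LG p -> sc_lift sH tH LH sG g h (L2 p) = p.
Proof.
move=> Hp; have [x0 Px0] := PP_nonempty Hp.
apply: functional_extensionality => j; rewrite /sc_lift.
rewrite [p j]surjective_pairing; congr pair; last first.
  have -> : lab (@sc_lab VH B) (L2 p) = psi (lab (@sc_lab VG A) p) by [].
  by rewrite h_psi //; apply: (PP_Y Px0).
apply/setP => u; rewrite inE; apply/idP/idP.
  move/asbT=> [w [Pw <-]].
  have Ew : edge_shift sH tH w by case: Pw.
  have [m Hm] := g_cont Ew (absz j).
  have Hw : sH (w (- m%:Z)) \in (L2 p (- m%:Z)).1 by case: Pw.
  have [x [Px Hx]] := (lift_mem _ _ _ _ _ _ _ _ _).1 Hw.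
  have Pphx := phi_PP Px.
  have Ex : edge_shift sG tG x by case: Px.
  have Ag : agree_on m w (phi x).
    by apply: (PP_agree rrH Pw Pphx).
  rewrite (Hm (phi x) (phi_map Ex) Ag j (leqnn _)) g_phi //.
  by case: Px.
move=> Hu; apply/asbT.
have [x [Px Hx]] := exists_path Hp Hu.
exists (phi x); split; first exact: phi_PP.
have Ex : edge_shift sG tG x by case: Px.
by rewrite g_phi.
Qed.
End Back.
End Forward.

Theorem corollary4p3 (A B : finType)
  (VG EG : finType) (sG tG : EG -> VG) (LG : EG -> A)
  (VH EH : finType) (sH tH : EH -> VH) (LH : EH -> B)
  (Y : (int -> A) -> Prop) (Z : (int -> B) -> Prop)
  (psi : (int -> A) -> (int -> B)) (phi : (int -> EG) -> (int -> EH)) :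
  no_sinks_sources sG tG -> no_sinks_sources sH tH ->
  right_resolving sG LG -> right_resolving sH LH ->
  presents sG tG LG Y -> presents sH tH LH Z ->
  conjugacy Y Z psi ->
  conjugacy (edge_shift sG tG) (edge_shift sH tH) phi ->
  (forall x, edge_shift sG tG x -> lab LH (phi x) = psi (lab LG x)) ->
  exists phi'' : (int -> {set VG} * A) -> (int -> {set VH} * B),
    conjugacy (sc_shift sG tG LG) (sc_shift sH tH LH) phi'' /\
    (forall x, sc_shift sG tG LG x ->
       lab (@sc_lab VH B) (phi'' x) = psi (lab (@sc_lab VG A) x)).
Proof.
move=> _ _ rrG rrH presY presZ [psi_map psi_shift psi_cont [h [h_map h_psi psi_h h_cont]]]
  [phi_map phi_shift phi_cont [g [g_map g_phi phi_g g_cont]]] compat.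
have presG : forall x, edge_shift sG tG x -> Y (lab LG x).
  by move=> x Ex; apply/presY; exists x.
have presH : forall w, edge_shift sH tH w -> Z (lab LH w).
  by move=> w Ew; apply/presZ; exists w.
have Yshift : forall y, Y y -> Y (shift y).
  move=> y /presY [x [Ex ->]]; apply/presY; exists (shift x); split => //.
  exact: edge_shift_shift.
have g_shift : forall w, edge_shift sH tH w -> g (shift w) = shift (g w).
  move=> w Ew.
  have Eg := g_map w Ew.
  have Egs := edge_shift_shift Eg.
  by rewrite -{1}(phi_g w Ew) -phi_shift // g_phi.
have h_shift : forall z, Z z -> h (shift z) = shift (h z).
  move=> z Zz.
  have Yh := h_map z Zz.
  by rewrite -{1}(psi_h z Zz) -psi_shift // h_psi //; apply: Yshift.
have compat' : forall w, edge_shift sH tH w -> lab LG (g w) = h (lab LH w).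
  move=> w Ew.
  have E1 := compat _ (g_map w Ew); rewrite phi_g // in E1.
  by rewrite E1 h_psi //; apply: presG; apply: g_map.
exists (sc_lift sG tG LG sH phi psi); split => //.
split.
- by eapply sc_lift_map; eassumption.
- by eapply sc_lift_shift; eassumption.
- by eapply sc_lift_cont; eassumption.
exists (sc_lift sH tH LH sG g h); split.
- by eapply sc_lift_map; eassumption.
- by eapply sc_lift_inv; eassumption.
- by eapply sc_lift_inv; eassumption.
- by eapply sc_lift_cont; eassumption.
Qed.
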